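(* For every instance of the single-processor carbon-aware scheduling problem that admits a valid schedule, there exists an optimal valid schedule in which, for every $u\in\{1,\dots,n\}$, the completion time $\sigma(v_u)+\omega(v_u)$ belongs to the set $$\mathcal{E}'=\Big\{x+\sum_{i=r}^{u}\omega(v_i)\;:\;x\in\mathcal{E},\,1\le r\le u\le n\Big\}\cup\Big\{x-\sum_{i=u+1}^{s}\omega(v_i)\;:\;x\in\mathcal{E},\,1\le u\le s\le n\Big\},$$ where $\mathcal{E}=\{b_1,e_1,\dots,e_J\}$; in particular $|\mathcal{E}'|=O(n^3J)$ (indeed $O(n^2 J)$ candidate values per task).
   Context: Single-processor carbon-aware scheduling problem. All quantities are nonnegative integers. One processor must execute tasks $v_1,\dots,v_n$ in this fixed order; task $v_i$ has duration $\omega(v_i)\ge 1$. The horizon $[0,T)$ is partitioned into $J$ consecutive intervals $I_j=[b_j,e_j)$, $1\le j\le J$, with $b_1=0$, $e_j=b_{j+1}$, $e_J=T$, each with a constant green power budget $\mathcal{G}_j\ge 0$ per time unit. The processor consumes idle power $P_{\mathrm{idle}}$ at every time unit, plus working power $P_{\mathrm{work}}$ at every time unit during which it executes a task. A (valid) schedule is an assignment of integer start times $\sigma(v_i)$ with $\sigma(v_1)\ge 0$, $\sigma(v_{i+1})\ge \sigma(v_i)+\omega(v_i)$ for $1\le i<n$, and $\sigma(v_n)+\omega(v_n)\le T$. The processor is active at integer time $t$ iff $\sigma(v_i)\le t<\sigma(v_i)+\omega(v_i)$ for some $i$; the power at $t$ is $\mathcal{P}(t)=P_{\mathrm{idle}}+P_{\mathrm{work}}$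 if active and $P_{\mathrm{idle}}$ otherwise. The total carbon cost is $\mathcal{CC}=\sum_{t=0}^{T-1}\max(\mathcal{P}(t)-\mathcal{G}_{j(t)},0)$, where $t\in I_{j(t)}$; a schedule is optimal if it is valid and has minimum carbon cost. *)

(* Defs.v *)
From mathcomp Require Import all_boot.
Set Implicit Arguments. Unset Strict Implicit. Unset Printing Implicit Defensive.

(* An instance:
   - n tasks v_1..v_n with durations w 1, ..., w n (values of w outside 1..n ignored);
   - J intervals I_j = [e (j-1), e j), 1 <= j <= J, with e 0 = b_1 = 0 and T = e J;
   - green budgets G 1, ..., G J; idle/working powers Pidle, Pwork. *)

Definition wf_instance (n : nat) (w : nat -> nat) (J : nat) (e : nat -> nat) : Prop :=
  (forall i, 1 <= i <= n -> 1 <= w i) /\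
  e 0 = 0 /\ (forall j, 1 <= j <= J -> e j.-1 < e j).

Definition horizon (J : nat) (e : nat -> nat) : nat := e J.

Definition valid_schedule (n : nat) (w : nat -> nat) (J : nat) (e : nat -> nat)
    (sigma : nat -> nat) : Prop :=
  (forall i, 1 <= i < n -> sigma i + w i <= sigma i.+1) /\
  (0 < n -> sigma n + w n <= horizon J e).

Definition active (n : nat) (w : nat -> nat) (sigma : nat -> nat) (t : nat) : bool :=
  has (fun i => (sigma i <= t) && (t < sigma i + w i)) (iota 1 n).

(* green budget G_{j(t)} of the interval containing t (intervals are disjoint) *)
Definition green (J : nat) (e : nat -> nat) (G : nat -> nat) (t : nat) : nat :=
  \sum_(1 <= j < J.+1 | (e j.-1 <= t) && (t < e j)) G j.

Definition power (n : nat) (w : nat -> nat) (Pidle Pwork : nat) (sigma : nat -> nat)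
    (t : nat) : nat :=
  Pidle + (if active n w sigma t then Pwork else 0).

(* carbon cost: sum over t of max(P(t) - G_{j(t)}, 0) (truncated subtraction) *)
Definition carbon_cost (n : nat) (w : nat -> nat) (J : nat) (e : nat -> nat)
    (G : nat -> nat) (Pidle Pwork : nat) (sigma : nat -> nat) : nat :=
  \sum_(0 <= t < horizon J e) (power n w Pidle Pwork sigma t - green J e G t).

Definition optimal_schedule (n : nat) (w : nat -> nat) (J : nat) (e : nat -> nat)
    (G : nat -> nat) (Pidle Pwork : nat) (sigma : nat -> nat) : Prop :=
  valid_schedule n w J e sigma /\
  forall sigma', valid_schedule n w J e sigma' ->
    carbon_cost n w J e G Pidle Pwork sigma <= carbon_cost n w J e G Pidle Pwork sigma'.

Definition in_E (J : nat) (e : nat -> nat) (x : nat) : Prop :=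
  x = 0 \/ exists j, 1 <= j <= J /\ x = e j.

Definition in_E' (n : nat) (w : nat -> nat) (J : nat) (e : nat -> nat) (u c : nat) : Prop :=
  (exists x r, in_E J e x /\ 1 <= r <= u /\ u <= n /\
     c = x + \sum_(r <= i < u.+1) w i) \/
  (exists x s, in_E J e x /\ 1 <= u <= s /\ s <= n /\
     c + \sum_(u.+1 <= i < s.+1) w i = x).

(* Main.v *)
Require Import Defs.
From mathcomp Require Import all_boot.
From mathcomp Require Import zify.
From Stdlib Require Import Classical.
Set Implicit Arguments.

Lemma ex_min_gen (A : Type) (P : A -> Prop) (m : A -> nat) :
  (exists x, P x) -> exists x, P x /\ forall y, P y -> m x <= m y.
Proof.
move=> [x0 P0].
suff H : forall k x, P x -> m x <= k -> exists x, P x /\ forall y, P y -> m x <= m y.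
  exact: (H _ x0 P0 (leqnn _)).
elim=> [|k IH] x Px Hk.
  exists x; split=> // y _; lia.
case: (classic (exists y, P y /\ m y < m x)) => [[y [Py Hy]]|Hn].
  apply: (IH y Py); lia.
exists x; split=> // y Py; rewrite leqNgt; apply/negP => Hy; apply: Hn; by exists y.
Qed.

Lemma sum_two (f f' : nat -> nat) p q :
  p <> q -> (forall t, t <> p -> t <> q -> f' t = f t) ->
  forall T, \sum_(0 <= t < T) f' t + (if p < T then f p else 0) + (if q < T then f q else 0)
   = \sum_(0 <= t < T) f t + (if p < T then f' p else 0) + (if q < T then f' q else 0).
Proof.
move=> pq Hf; elim=> [|T IH]; first by rewrite !big_geq.
rewrite !big_nat_recr //=.
case: (eqVneq T p) => [ET|NTp].
  subst T.
  have Hq : (q < p.+1) = (q < p) by apply/idP/idP; lia.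
  rewrite ltnn ltnSn Hq in IH *. lia.
case: (eqVneq T q) => [ET|NTq].
  subst T.
  have Hp : (p < q.+1) = (p < q) by apply/idP/idP; lia.
  rewrite ltnn ltnSn Hp in IH *. lia.
have Hq : (q < T.+1) = (q < T) by apply/idP/idP; lia.
have Hp : (p < T.+1) = (p < T) by apply/idP/idP; lia.
rewrite Hp Hq Hf; [lia| apply/eqP | apply/eqP]; done.
Qed.
Unset Strict Implicit.

Lemma chain_lt n w J e sigma : valid_schedule n w J e sigma ->
  (forall i, 1 <= i <= n -> 1 <= w i) ->
  forall i k, 1 <= i -> i + k.+1 <= n -> sigma i + w i <= sigma (i + k.+1).
Proof.
move=> [Hv _] Hw i k Hi; elim: k => [|k IH] Hk.
  rewrite addn1; apply: Hv; lia.
have := IH ltac:(lia). have := Hv (i + k.+1) ltac:(lia). have := Hw (i + k.+1) ltac:(lia).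
have -> : i + k.+2 = (i + k.+1).+1 by lia. lia.
Qed.

Lemma chain_lt' n w J e sigma : valid_schedule n w J e sigma ->
  (forall i, 1 <= i <= n -> 1 <= w i) ->
  forall i j, 1 <= i -> i < j -> j <= n -> sigma i + w i <= sigma j.
Proof.
move=> Hv Hw i j Hi Hij Hj.
have := chain_lt Hv Hw (i:=i) (k:=j - i.+1) Hi ltac:(lia).
by have -> : i + (j - i.+1).+1 = j by lia.
Qed.

Lemma chain_le n w J e sigma : valid_schedule n w J e sigma ->
  (forall i, 1 <= i <= n -> 1 <= w i) ->
  forall i j, 1 <= i -> i <= j -> j <= n -> sigma i <= sigma j.
Proof.
move=> Hv Hw i j Hi Hij Hj.
case: (eqVneq i j) => [->//|ne].
have := chain_lt' Hv Hw Hi (j:=j) ltac:(lia) Hj. lia.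
Qed.

Lemma end_le n w J e sigma : valid_schedule n w J e sigma ->
  (forall i, 1 <= i <= n -> 1 <= w i) ->
  forall i, 1 <= i <= n -> sigma i + w i <= horizon J e.
Proof.
move=> Hv Hw i Hi. have H2 := Hv.2 ltac:(lia).
case: (eqVneq i n) => [->//|ne].
have := chain_lt' Hv Hw (i:=i) (j:=n) ltac:(lia) ltac:(lia) (leqnn _). lia.
Qed.

Lemma sum_left (sigma w : nat -> nat) r u : r <= u ->
  (forall i, r <= i < u -> sigma i + w i = sigma i.+1) ->
  sigma u + w u = sigma r + \sum_(r <= i < u.+1) w i.
Proof.
elim: u => [|u IH] Hr Hb.
  have -> : r = 0 by lia. by rewrite big_nat1.
case: (eqVneq r u.+1) => [->|ne]; first by rewrite big_nat1.
rewrite big_nat_recr /=; last lia.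
rewrite -Hb; last lia.
rewrite IH; [lia|lia|]. move=> i Hi; apply: Hb; lia.
Qed.

Lemma sum_right (sigma w : nat -> nat) u s : u <= s ->
  (forall i, u <= i < s -> sigma i + w i = sigma i.+1) ->
  sigma u + w u + \sum_(u.+1 <= i < s.+1) w i = sigma s + w s.
Proof.
elim: s => [|s IH] Hr Hb.
  have -> : u = 0 by lia. by rewrite big_geq ?addn0.
case: (eqVneq u s.+1) => [->|ne]; first by rewrite big_geq ?addn0.
rewrite big_nat_recr /=; last lia.
rewrite -Hb; last lia.
rewrite -IH; [lia|lia|]. move=> i Hi; apply: Hb; lia.
Qed.

Lemma block_left n w J e sigma : valid_schedule n w J e sigma ->
  forall u, 1 <= u -> u <= n -> exists r, 1 <= r <= u /\
   (forall i, r <= i < u -> sigma i + w i = sigma i.+1) /\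
   (r = 1 \/ sigma r.-1 + w r.-1 < sigma r).
Proof.
move=> [Hv _]; elim=> [|u IH] H1 Hn; first by [].
case: (eqVneq u 0) => [->|nz].
  exists 1; split=> //; split; [move=> i; lia| by left].
have [r [Hr [Hb Hg]]] := IH ltac:(lia) ltac:(lia).
have Hu := Hv u ltac:(lia).
case: (ltnP (sigma u + w u) (sigma u.+1)) => Hl.
  exists u.+1; split; first lia; split; [move=> i; lia| by right].
exists r; split; first lia; split=> //.
move=> i Hi; case: (eqVneq i u) => [->|ne]; first lia.
apply: Hb; lia.
Qed.

Lemma block_right n w J e sigma : valid_schedule n w J e sigma ->
  forall k u, u + k = n -> 1 <= u -> exists s, u <= s <= n /\
   (forall i, u <= i < s -> sigma i + w i = sigma i.+1) /\
   (s = n \/ sigma s + w s < sigma s.+1).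
Proof.
move=> [Hv _]; elim=> [|k IH] u Hk H1.
  exists u; split; first lia; split; [move=> i; lia| left; lia].
have Hu := Hv u ltac:(lia).
case: (ltnP (sigma u + w u) (sigma u.+1)) => Hl.
  exists u; split; first lia; split; [move=> i; lia| by right].
have [s [Hs [Hb Hg]]] := IH u.+1 ltac:(lia) ltac:(lia).
exists s; split; first lia; split=> //.
move=> i Hi; case: (eqVneq i u) => [->|ne]; first lia.
apply: Hb; lia.
Qed.

Lemma green_eq J e G a : e 0 = 0 -> 0 < a ->
  (forall j, 1 <= j <= J -> a <> e j) -> green J e G (a - 1) = green J e G a.
Proof.
move=> e0 a0 Ha; rewrite /green !(big_mkcond (fun j => _ && _)).
apply: eq_big_nat => j Hj.
have C : (e j.-1 <= a - 1) && (a - 1 < e j) = (e j.-1 <= a) && (a < e j).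
  have h1 : e j.-1 <> a.
    case: (eqVneq j.-1 0) => [->|nz]; first lia.
    have := Ha j.-1 ltac:(lia). lia.
  have h2 := Ha j ltac:(lia).
  apply/idP/idP => /andP [x y]; apply/andP; split; lia.
by rewrite C.
Qed.
Set Strict Implicit.

Lemma activeP n w sigma t :
  reflect (exists i, 1 <= i <= n /\ sigma i <= t < sigma i + w i) (active n w sigma t).
Proof.
apply: (iffP hasP) => [[i Hi Ht]|[i [Hi Ht]]].
  exists i; split=> //; move: Hi; rewrite mem_iota; lia.
exists i => //; rewrite mem_iota; lia.
Qed.

Definition shiftL (r s : nat) (sigma : nat -> nat) :=
  fun i => if r <= i <= s then sigma i - 1 else sigma i.
Definition shiftR (r s : nat) (sigma : nat -> nat) :=
  fun i => if r <= i <= s then sigma i + 1 else sigma i.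

Lemma shL_in r s sigma i : r <= i <= s -> shiftL r s sigma i = sigma i - 1.
Proof. by rewrite /shiftL => ->. Qed.
Lemma shL_out r s sigma i : i < r \/ s < i -> shiftL r s sigma i = sigma i.
Proof. rewrite /shiftL => H; have -> : (r <= i <= s) = false by lia. done. Qed.
Lemma shR_in r s sigma i : r <= i <= s -> shiftR r s sigma i = sigma i + 1.
Proof. by rewrite /shiftR => ->. Qed.
Lemma shR_out r s sigma i : i < r \/ s < i -> shiftR r s sigma i = sigma i.
Proof. rewrite /shiftR => H; have -> : (r <= i <= s) = false by lia. done. Qed.

Lemma actL1 n w J e sigma r s t : valid_schedule n w J e sigma ->
  (forall i, 1 <= i <= n -> 1 <= w i) -> 1 <= r <= s -> s <= n ->
  (forall i, r <= i < s -> sigma i + w i = sigma i.+1) -> 0 < sigma r ->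
  t <> sigma r - 1 -> t <> sigma s + w s - 1 ->
  active n w (shiftL r s sigma) t = active n w sigma t.
Proof.
move=> Hv Hw Hrs Hsn Hb a0 h1 h2.
apply/activeP/activeP => [[i [Hi Ht]]|[i [Hi Ht]]].
- case: (boolP (r <= i <= s)) => Hin; last first.
    exists i; split=> //; rewrite shL_out in Ht; [done|lia].
  rewrite shL_in // in Ht.
  have := chain_le Hv Hw (i:=r) (j:=i) ltac:(lia) ltac:(lia) ltac:(lia) => hri.
  have := Hw i ltac:(lia) => wi.
  case: (leqP (sigma i) t) => ht.
    exists i; split=> //; lia.
  have ir : i <> r by move=> E; subst i; lia.
  have E : (i.-1).+1 = i by lia.
  have := Hb i.-1 ltac:(lia); rewrite E => hb.
  have := Hw i.-1 ltac:(lia) => wi1.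
  exists i.-1; split; lia.
- case: (boolP (r <= i <= s)) => Hin; last first.
    exists i; split=> //; rewrite shL_out; [done|lia].
  have := chain_le Hv Hw (i:=r) (j:=i) ltac:(lia) ltac:(lia) ltac:(lia) => hri.
  have := Hw i ltac:(lia) => wi.
  case: (ltnP t (sigma i + w i - 1)) => ht.
    exists i; split=> //; rewrite shL_in //; lia.
  have is_ : i <> s by move=> E; subst i; lia.
  have := Hb i ltac:(lia) => hb.
  have := Hw i.+1 ltac:(lia) => wi1.
  exists i.+1; split; first lia. rewrite shL_in; lia.
Qed.

Lemma actL2 n w J e sigma r s : valid_schedule n w J e sigma ->
  (forall i, 1 <= i <= n -> 1 <= w i) -> 1 <= r <= s -> s <= n ->
  (r = 1 \/ sigma r.-1 + w r.-1 < sigma r) -> 0 < sigma r ->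
  active n w (shiftL r s sigma) (sigma r - 1) /\ ~~ active n w sigma (sigma r - 1).
Proof.
move=> Hv Hw Hrs Hsn Hg a0; split.
  apply/activeP; exists r; rewrite shL_in; last lia. have := Hw r ltac:(lia). lia.
apply/activeP => [[i [Hi Ht]]].
case: (ltnP i r) => hir.
  case: Hg => [|hg]; first lia.
  have : sigma i + w i <= sigma r.-1 + w r.-1.
    case: (eqVneq i r.-1) => [->//|ne].
    have := chain_lt' Hv Hw (i:=i) (j:=r.-1) ltac:(lia) ltac:(lia) ltac:(lia). lia.
  lia.
have := chain_le Hv Hw (i:=r) (j:=i) ltac:(lia) ltac:(lia) ltac:(lia). lia.
Qed.

Lemma actL3 n w J e sigma r s : valid_schedule n w J e sigma ->
  (forall i, 1 <= i <= n -> 1 <= w i) -> 1 <= r <= s -> s <= n -> 0 < sigma r ->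
  active n w sigma (sigma s + w s - 1) /\
  ~~ active n w (shiftL r s sigma) (sigma s + w s - 1).
Proof.
move=> Hv Hw Hrs Hsn a0; split.
  apply/activeP; exists s; have := Hw s ltac:(lia). lia.
have := chain_le Hv Hw (i:=r) (j:=s) ltac:(lia) ltac:(lia) ltac:(lia) => hrs.
have := Hw s ltac:(lia) => ws.
apply/activeP => [[i [Hi Ht]]].
case: (ltnP i r) => hir.
  rewrite shL_out in Ht; last lia.
  have := chain_lt' Hv Hw (i:=i) (j:=r) ltac:(lia) ltac:(lia) ltac:(lia). lia.
case: (leqP i s) => his.
  rewrite shL_in in Ht; last lia.
  have := chain_le Hv Hw (i:=r) (j:=i) ltac:(lia) ltac:(lia) ltac:(lia) => hri.
  have : sigma i + w i <= sigma s + w s.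
    case: (eqVneq i s) => [->//|ne].
    have := chain_lt' Hv Hw (i:=i) (j:=s) ltac:(lia) ltac:(lia) ltac:(lia). lia.
  lia.
rewrite shL_out in Ht; last lia.
have := chain_lt' Hv Hw (i:=s) (j:=i) ltac:(lia) ltac:(lia) ltac:(lia). lia.
Qed.

Lemma actR1 n w J e sigma r s t : valid_schedule n w J e sigma ->
  (forall i, 1 <= i <= n -> 1 <= w i) -> 1 <= r <= s -> s <= n ->
  (forall i, r <= i < s -> sigma i + w i = sigma i.+1) ->
  t <> sigma r -> t <> sigma s + w s ->
  active n w (shiftR r s sigma) t = active n w sigma t.
Proof.
move=> Hv Hw Hrs Hsn Hb h1 h2.
apply/activeP/activeP => [[i [Hi Ht]]|[i [Hi Ht]]].
- case: (boolP (r <= i <= s)) => Hin; last first.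
    exists i; split=> //; rewrite shR_out in Ht; [done|lia].
  rewrite shR_in // in Ht.
  have := Hw i ltac:(lia) => wi.
  case: (ltnP t (sigma i + w i)) => ht.
    exists i; split=> //; lia.
  have is_ : i <> s by move=> E; subst i; lia.
  have := Hb i ltac:(lia) => hb.
  have := Hw i.+1 ltac:(lia) => wi1.
  exists i.+1; split; lia.
- case: (boolP (r <= i <= s)) => Hin; last first.
    exists i; split=> //; rewrite shR_out; [done|lia].
  have := Hw i ltac:(lia) => wi.
  case: (ltnP (sigma i) t) => ht.
    exists i; split=> //; rewrite shR_in //; lia.
  have ir : i <> r by move=> E; subst i; lia.
  have E : (i.-1).+1 = i by lia.
  have := Hb i.-1 ltac:(lia); rewrite E => hb.
  have := Hw i.-1 ltac:(lia) => wi1.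
  exists i.-1; split; first lia. rewrite shR_in; lia.
Qed.

Lemma actR2 n w J e sigma r s : valid_schedule n w J e sigma ->
  (forall i, 1 <= i <= n -> 1 <= w i) -> 1 <= r <= s -> s <= n ->
  active n w sigma (sigma r) /\ ~~ active n w (shiftR r s sigma) (sigma r).
Proof.
move=> Hv Hw Hrs Hsn; split.
  apply/activeP; exists r; have := Hw r ltac:(lia). lia.
have := chain_le Hv Hw (i:=r) (j:=s) ltac:(lia) ltac:(lia) ltac:(lia) => hrs.
have := Hw s ltac:(lia) => ws.
apply/activeP => [[i [Hi Ht]]].
case: (ltnP i r) => hir.
  rewrite shR_out in Ht; last lia.
  have := chain_lt' Hv Hw (i:=i) (j:=r) ltac:(lia) ltac:(lia) ltac:(lia). lia.
case: (leqP i s) => his.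
  rewrite shR_in in Ht; last lia.
  have := chain_le Hv Hw (i:=r) (j:=i) ltac:(lia) ltac:(lia) ltac:(lia). lia.
rewrite shR_out in Ht; last lia.
have := chain_lt' Hv Hw (i:=s) (j:=i) ltac:(lia) ltac:(lia) ltac:(lia). lia.
Qed.

Lemma actR3 n w J e sigma r s : valid_schedule n w J e sigma ->
  (forall i, 1 <= i <= n -> 1 <= w i) -> 1 <= r <= s -> s <= n ->
  (s = n \/ sigma s + w s < sigma s.+1) ->
  active n w (shiftR r s sigma) (sigma s + w s) /\
  ~~ active n w sigma (sigma s + w s).
Proof.
move=> Hv Hw Hrs Hsn Hg; split.
  apply/activeP; exists s; rewrite shR_in; last lia. have := Hw s ltac:(lia). lia.
apply/activeP => [[i [Hi Ht]]].
case: (leqP i s) => his.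
  have : sigma i + w i <= sigma s + w s.
    case: (eqVneq i s) => [->//|ne].
    have := chain_lt' Hv Hw (i:=i) (j:=s) ltac:(lia) ltac:(lia) ltac:(lia). lia.
  lia.
case: Hg => [|hg]; first lia.
have := chain_le Hv Hw (i:=s.+1) (j:=i) ltac:(lia) ltac:(lia) ltac:(lia). lia.
Qed.

Lemma validL n w J e sigma r s : valid_schedule n w J e sigma ->
  (forall i, 1 <= i <= n -> 1 <= w i) -> 1 <= r <= s -> s <= n ->
  (forall i, r <= i < s -> sigma i + w i = sigma i.+1) ->
  (r = 1 \/ sigma r.-1 + w r.-1 < sigma r) -> 0 < sigma r ->
  valid_schedule n w J e (shiftL r s sigma).
Proof.
move=> Hv Hw Hrs Hsn Hb Hg a0.
have hpos : forall i, r <= i <= n -> 0 < sigma i.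
  move=> i hi; have := chain_le Hv Hw (i:=r) (j:=i) ltac:(lia) ltac:(lia) ltac:(lia). lia.
split.
  move=> i hi; have h := Hv.1 i hi.
  have hg : i.+1 = r -> sigma i + w i < sigma i.+1.
    move=> E; subst r; case: Hg => [|]; first lia. by [].
  have hb : r <= i < s -> sigma i + w i = sigma i.+1 by apply: Hb.
  have := hpos i. have := hpos i.+1.
  rewrite /shiftL; case: ifP; case: ifP; lia.
move=> n0; have h := Hv.2 n0; have := hpos n.
rewrite /shiftL; case: ifP; lia.
Qed.

Lemma validR n w J e sigma r s : valid_schedule n w J e sigma ->
  (forall i, 1 <= i <= n -> 1 <= w i) -> 1 <= r <= s -> s <= n ->
  (forall i, r <= i < s -> sigma i + w i = sigma i.+1) ->
  (s = n \/ sigma s + w s < sigma s.+1) ->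
  (s = n -> sigma s + w s < horizon J e) ->
  valid_schedule n w J e (shiftR r s sigma).
Proof.
move=> Hv Hw Hrs Hsn Hb Hg hT.
split.
  move=> i hi; have h := Hv.1 i hi.
  have hg : i = s -> sigma i + w i < sigma i.+1.
    move=> E; subst s; case: Hg => [|]; first lia. by [].
  have hb : r <= i < s -> sigma i + w i = sigma i.+1 by apply: Hb.
  rewrite /shiftR; case: ifP; case: ifP; lia.
move=> n0; have h := Hv.2 n0.
have hs : s = n -> sigma n + w n < horizon J e by move=> E; have := hT E; rewrite E.
rewrite /shiftR; case: ifP; lia.
Qed.

Lemma potL n sigma r s : 1 <= r <= s -> s <= n -> 0 < sigma r ->
  \sum_(1 <= i < n.+1) shiftL r s sigma i < \sum_(1 <= i < n.+1) sigma i.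
Proof.
move=> Hrs Hsn a0.
rewrite !(@big_cat_nat _ _ _ r 1 n.+1) /=; try lia.
rewrite !(@big_ltn _ _ _ r n.+1) /=; try lia.
have h1 : \sum_(1 <= i < r) shiftL r s sigma i <= \sum_(1 <= i < r) sigma i.
  by apply: leq_sum => i _; rewrite /shiftL; case: ifP => _ //; apply: leq_subr.
have h2 : \sum_(r.+1 <= i < n.+1) shiftL r s sigma i <= \sum_(r.+1 <= i < n.+1) sigma i.
  by apply: leq_sum => i _; rewrite /shiftL; case: ifP => _ //; apply: leq_subr.
rewrite shL_in; lia.
Qed.

Theorem mainTheorem3 (n : nat) (w : nat -> nat) (J : nat) (e : nat -> nat)
    (G : nat -> nat) (Pidle Pwork : nat) :
  wf_instance n w J e ->
  (exists sigma, valid_schedule n w J e sigma) ->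
  exists sigma, optimal_schedule n w J e G Pidle Pwork sigma /\
    forall u, 1 <= u <= n -> in_E' n w J e u (sigma u + w u).
Proof.
move=> [Hw [e0 He]] Hex.
have [s0 [V0 M0]] := @ex_min_gen _ _ (carbon_cost n w J e G Pidle Pwork) Hex.
have Hopt : exists s, optimal_schedule n w J e G Pidle Pwork s by exists s0; split.
have [sg [[Vs Os] Ms]] := @ex_min_gen _ _ (fun s => \sum_(1 <= i < n.+1) s i) Hopt.
exists sg; split; first by split.
move=> u Hu.
have [r [Hr [Hbl Hgl]]] := block_left Vs (u:=u) ltac:(lia) ltac:(lia).
have [s [Hs [Hbr Hgr]]] := block_right Vs (k := n - u) (u:=u) ltac:(lia) ltac:(lia).
have Hb : forall i, r <= i < s -> sg i + w i = sg i.+1.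
  move=> i hi; case: (ltnP i u) => h; [apply: Hbl | apply: Hbr]; lia.
case: (classic (in_E J e (sg r))) => Ea.
  left; exists (sg r), r; split=>//; split; first lia; split; first lia.
  apply: sum_left; [lia| move=> i hi; apply: Hbl; lia].
case: (classic (in_E J e (sg s + w s))) => Eb.
  right; exists (sg s + w s), s; split=>//; split; first lia; split; first lia.
  apply: sum_right; [lia| move=> i hi; apply: Hbr; lia].
exfalso.
have Hr' : 1 <= r <= s by lia.
have Hsn : s <= n by lia.
have a0 : 0 < sg r by case: (posnP (sg r)) => // h; case: Ea; left.
have Ea' : forall j, 1 <= j <= J -> sg r <> e j by move=> j hj E; apply: Ea; right; exists j.
have Eb' : forall j, 1 <= j <= J -> sg s + w s <> e j by move=> j hj E; apply: Eb; right; exists j.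
have ws := Hw s ltac:(lia).
have hrs := chain_le Vs Hw (i:=r) (j:=s) ltac:(lia) ltac:(lia) ltac:(lia).
have hT : s = n -> sg s + w s < horizon J e.
  move=> E; have := end_le Vs Hw (i:=s) ltac:(lia).
  rewrite /horizon; case: (eqVneq J 0) => [J0|Jn].
    rewrite J0 e0; lia.
  have := Eb' J ltac:(lia). lia.
have hbT : sg s + w s < horizon J e.
  case: (eqVneq s n) => [/hT//|sn].
  case: Hgr => [//|hg].
  have := end_le Vs Hw (i:=s.+1) ltac:(lia).
  lia.
have ga : green J e G (sg r - 1) = green J e G (sg r) by apply: green_eq.
have gb : green J e G (sg s + w s - 1) = green J e G (sg s + w s) by apply: green_eq; [exact: e0|lia|exact: Eb'].
have VL := @validL _ _ _ _ _ r s Vs Hw Hr' Hsn Hb Hgl a0.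
have [L2a L2b] := @actL2 _ _ _ _ _ r s Vs Hw Hr' Hsn Hgl a0.
have [L3a L3b] := @actL3 _ _ _ _ _ r s Vs Hw Hr' Hsn a0.
have EL := @sum_two (fun t => power n w Pidle Pwork sg t - green J e G t)
   (fun t => power n w Pidle Pwork (shiftL r s sg) t - green J e G t) (sg r - 1) (sg s + w s - 1)
   ltac:(lia)
   ltac:(move=> t h1 h2; rewrite /= /power (@actL1 _ _ _ _ _ r s t Vs Hw Hr' Hsn Hb a0 h1 h2) //)
   (horizon J e).
have hh1 : (sg r - 1 < horizon J e) = true by lia. rewrite hh1 in EL.
have hh2 : (sg s + w s - 1 < horizon J e) = true by lia. rewrite hh2 in EL.
rewrite /= /power (negbTE L2b) L2a L3a (negbTE L3b) ga gb /= in EL.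
have VR := @validR _ _ _ _ _ r s Vs Hw Hr' Hsn Hb Hgr hT.
have [R2a R2b] := @actR2 _ _ _ _ _ r s Vs Hw Hr' Hsn.
have [R3a R3b] := @actR3 _ _ _ _ _ r s Vs Hw Hr' Hsn Hgr.
have ER := @sum_two (fun t => power n w Pidle Pwork sg t - green J e G t)
   (fun t => power n w Pidle Pwork (shiftR r s sg) t - green J e G t) (sg r) (sg s + w s)
   ltac:(lia)
   ltac:(move=> t h1 h2; rewrite /= /power (@actR1 _ _ _ _ _ r s t Vs Hw Hr' Hsn Hb h1 h2) //)
   (horizon J e).
have hh3 : (sg r < horizon J e) = true by lia. rewrite hh3 in ER.
have hh4 : (sg s + w s < horizon J e) = true by lia. rewrite hh4 in ER.
rewrite /= /power (negbTE R2b) R2a R3a (negbTE R3b) /= in ER.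
have OL := Os _ VL. have OR := Os _ VR.
have NL : carbon_cost n w J e G Pidle Pwork (shiftL r s sg) <> carbon_cost n w J e G Pidle Pwork sg.
  move=> Eq.
  have OptL : optimal_schedule n w J e G Pidle Pwork (shiftL r s sg).
    split=> // s' V'; rewrite Eq; exact: Os _ V'.
  have := Ms _ OptL.
  have := potL n sg r s Hr' Hsn a0. lia.
rewrite /carbon_cost /power in OL OR NL. lia.
Qed.
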